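(* For every integer $k\ge2$, with $p_k:=2^{1-k}$, $$p_k\,G\!\left(\frac{k^2+k+1}{(2k+1)^2}\right)+(1-p_k)\,G\!\left(\frac{k^2+k-1}{(2k+1)^2}\right)\ \ge\ G\!\left(\tfrac14\right),$$ and moreover $$p_k\,G\!\left(\frac{k^2+k+1}{(2k+1)^2}\right)+(1-p_k)\cdot\frac12\ \ge\ G\!\left(\tfrac14\right).$$
   Context: $\Phi$ denotes the standard normal distribution function. For $c>0$, $G(c):=\frac12\left(1-\frac12\,\frac{1-\Phi(c^{-1/2})}{1-\Phi(\sqrt2)}\right)$. *)

(* Defs.v *)
From Stdlib Require Import Reals Lra.
Open Scope R_scope.

Definition phi (t : R) : R := exp (- (t * t) / 2) / sqrt (2 * PI).

Lemma phi_continuous : continuity phi.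
Proof.
  unfold phi. intro x.
  apply continuity_pt_div.
  - apply (continuity_pt_comp (fun t => - (t * t) / 2) exp).
    + unfold Rdiv. apply continuity_pt_mult.
      * apply continuity_pt_opp. apply continuity_pt_mult;
          apply derivable_continuous_pt; apply derivable_pt_id.
      * apply continuity_pt_const. intros a b; reflexivity.
    + apply derivable_continuous_pt. apply derivable_pt_exp.
  - apply continuity_pt_const. intros a b; reflexivity.
  - apply Rgt_not_eq. apply sqrt_lt_R0. pose proof PI_RGT_0. lra.
Qed.

Lemma phi_integrable : forall a b : R, Riemann_integrable phi a b.
Proof.
  intros a b. destruct (Rle_dec a b) as [H|H].
  - apply continuity_implies_RiemannInt; [exact H|].
    intros; apply phi_continuous.
  - apply RiemannInt_P1. apply continuity_implies_RiemannInt; [lra|].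
    intros; apply phi_continuous.
Qed.

(* standard normal distribution function:
   Phi x = 1/2 + int_0^x phi  (since int_{-oo}^0 phi = 1/2) *)
Definition Phi (x : R) : R := / 2 + RiemannInt (phi_integrable 0 x).

Definition G (c : R) : R :=
  / 2 * (1 - / 2 * ((1 - Phi (/ sqrt c)) / (1 - Phi (sqrt 2)))).

(* Main.v *)
Require Import Defs.
From Stdlib Require Import Reals Lra Lia.
Open Scope R_scope.

Definition SS := sqrt (2 * PI).
Definition J x := RiemannInt (phi_integrable 0 x).
Definition II a b := RiemannInt (phi_integrable a b).

Lemma SS_pos : 0 < SS.
Proof. unfold SS. apply sqrt_lt_R0. pose proof PI_RGT_0. lra. Qed.

Lemma J_split a b : J b = J a + II a b.
Proof. unfold J, II. symmetry. apply RiemannInt_P26. Qed.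

Lemma J0 : J 0 = 0.
Proof. unfold J. apply RiemannInt_P9. Qed.

Lemma phi_pos t : 0 < phi t.
Proof. unfold phi. apply Rdiv_lt_0_compat. apply exp_pos. exact SS_pos. Qed.

Lemma phi_decr a t : 0 <= a <= t -> phi t <= phi a.
Proof.
  intros H. unfold phi. unfold Rdiv. apply Rmult_le_compat_r.
  - left. apply Rinv_0_lt_compat. exact SS_pos.
  - apply exp_le_3 || idtac. destruct (Req_dec a t) as [->|Hne]; [lra|].
    left. apply exp_increasing. nra.
Qed.

Lemma II_bounds a b : 0 <= a <= b -> phi b * (b - a) <= II a b <= phi a * (b - a).
Proof.
  intros H. unfold II. apply RiemannInt_const_bound; [lra|].
  intros x Hx. split; apply phi_decr; lra.
Qed.

Lemma exp_pow_n n x : exp x ^ n = exp (INR n * x).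
Proof.
  induction n as [|n IH]; simpl.
  - rewrite Rmult_0_l, exp_0. reflexivity.
  - rewrite IH, <- exp_plus. f_equal. destruct n; simpl; ring.
Qed.

Lemma exp_lb64 y : 0 <= y -> (1 + y / 64) ^ 64 <= exp y.
Proof.
  intros Hy. replace y with (INR 64 * (y / 64)) at 2.
  2:{ replace (INR 64) with 64 by (simpl; ring). field. }
  rewrite <- exp_pow_n. apply pow_incr. split; [lra|]. apply exp_ineq1_le.
Qed.

Lemma exp_ub16 y : 0 <= y < 16 -> exp y <= (/ (1 - y / 16)) ^ 16.
Proof.
  intros Hy. replace y with (INR 16 * (y / 16)) at 1.
  2:{ replace (INR 16) with 16 by (simpl; ring). field. }
  rewrite <- exp_pow_n. apply pow_incr. split; [left; apply exp_pos|].
  pose proof (exp_ineq1_le (- (y/16))) as H.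
  rewrite exp_Ropp in H.
  replace (exp (y/16)) with (/ / exp (y/16)) by (field; apply Rgt_not_eq, exp_pos).
  apply Rinv_le_contravar; lra.
Qed.

Lemma phi_ub a u w : 0 <= a -> w = 1 + a ^ 2 / 128 -> w ^ 64 * u >= 1 -> phi a <= u * / SS.
Proof.
  intros Ha Ew Hu. unfold phi. unfold Rdiv. fold SS.
  apply Rmult_le_compat_r; [left; apply Rinv_0_lt_compat, SS_pos|].
  pose proof (exp_lb64 (a * a / 2)) as H.
  assert (Hw : 0 < w) by (clear Hu H; rewrite Ew; assert (0 <= a^2) by nra; lra).
  assert (Hp : 0 < w ^ 64) by (apply pow_lt; exact Hw).
  assert (Ew' : 1 + a * a / 2 / 64 = w) by (rewrite Ew; field).
  rewrite Ew' in H. clear Ew Ew'.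
  replace (- (a * a) * / 2) with (- (a * a / 2)) by field.
  rewrite exp_Ropp.
  apply Rle_trans with (/ w ^ 64).
  - apply Rinv_le_contravar; [exact Hp| apply H; clear Hu Hp H; nra].
  - apply Rmult_le_reg_l with (w ^ 64); [exact Hp|].
    rewrite Rinv_r by lra. clear H Hw. generalize dependent (w ^ 64). intros; nra.
Qed.

Lemma step a b u : 0 <= a <= b -> (1 + a ^ 2 / 128) ^ 64 * u >= 1 ->
  J b <= J a + ((b - a) * u) * / SS.
Proof.
  intros Hab Hu. rewrite (J_split a b).
  pose proof (II_bounds a b Hab) as [_ H].
  pose proof (phi_ub a u (1 + a ^ 2 / 128) (proj1 Hab) eq_refl Hu). clear Hu.
  assert (0 <= b - a) by lra.
  assert (phi a * (b - a) <= u * / SS * (b - a)) by (apply Rmult_le_compat_r; lra).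
  lra.
Qed.

Lemma PI_lb : 312/100 < PI.
Proof.
  assert (156/100 < PI/2); [|lra].
  apply PI2_lower_bound;[split; lra | ].
  destruct (pre_cos_bound (156/100) 1) as [t _]; [lra | lra | ].
  apply Rlt_le_trans with (2 := t); clear t.
  unfold cos_approx; simpl; unfold cos_term.
  simpl. lra.
Qed.

Lemma SS_lb : 249/100 <= SS.
Proof.
  unfold SS. pose proof PI_lb.
  rewrite <- (sqrt_pow2 (249/100)) by lra.
  apply sqrt_le_1_alt. lra.
Qed.
Lemma J_chain : J (56/25) <= 24889/20000 * / SS /\ J (36/25) <= 10795/10000 * / SS.
Proof.
  pose proof J0.
  pose proof (step 0 (1/25) (100000/100000) ltac:(lra) ltac:(lra)) as h1.
  pose proof (step (1/25) (2/25) (99921/100000) ltac:(lra) ltac:(lra)) as h2.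
  pose proof (step (2/25) (3/25) (99681/100000) ltac:(lra) ltac:(lra)) as h3.
  pose proof (step (3/25) (4/25) (99283/100000) ltac:(lra) ltac:(lra)) as h4.
  pose proof (step (4/25) (5/25) (98729/100000) ltac:(lra) ltac:(lra)) as h5.
  pose proof (step (5/25) (6/25) (98021/100000) ltac:(lra) ltac:(lra)) as h6.
  pose proof (step (6/25) (7/25) (97162/100000) ltac:(lra) ltac:(lra)) as h7.
  pose proof (step (7/25) (8/25) (96157/100000) ltac:(lra) ltac:(lra)) as h8.
  pose proof (step (8/25) (9/25) (95011/100000) ltac:(lra) ltac:(lra)) as h9.
  pose proof (step (9/25) (10/25) (93729/100000) ltac:(lra) ltac:(lra)) as h10.
  pose proof (step (10/25) (11/25) (92317/100000) ltac:(lra) ltac:(lra)) as h11.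
  pose proof (step (11/25) (12/25) (90781/100000) ltac:(lra) ltac:(lra)) as h12.
  pose proof (step (12/25) (13/25) (89129/100000) ltac:(lra) ltac:(lra)) as h13.
  pose proof (step (13/25) (14/25) (87367/100000) ltac:(lra) ltac:(lra)) as h14.
  pose proof (step (14/25) (15/25) (85504/100000) ltac:(lra) ltac:(lra)) as h15.
  pose proof (step (15/25) (16/25) (83549/100000) ltac:(lra) ltac:(lra)) as h16.
  pose proof (step (16/25) (17/25) (81508/100000) ltac:(lra) ltac:(lra)) as h17.
  pose proof (step (17/25) (18/25) (79392/100000) ltac:(lra) ltac:(lra)) as h18.
  pose proof (step (18/25) (19/25) (77208/100000) ltac:(lra) ltac:(lra)) as h19.
  pose proof (step (19/25) (20/25) (74965/100000) ltac:(lra) ltac:(lra)) as h20.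
  pose proof (step (20/25) (21/25) (72673/100000) ltac:(lra) ltac:(lra)) as h21.
  pose proof (step (21/25) (22/25) (70340/100000) ltac:(lra) ltac:(lra)) as h22.
  pose proof (step (22/25) (23/25) (67975/100000) ltac:(lra) ltac:(lra)) as h23.
  pose proof (step (23/25) (24/25) (65587/100000) ltac:(lra) ltac:(lra)) as h24.
  pose proof (step (24/25) (25/25) (63183/100000) ltac:(lra) ltac:(lra)) as h25.
  pose proof (step (25/25) (26/25) (60772/100000) ltac:(lra) ltac:(lra)) as h26.
  pose proof (step (26/25) (27/25) (58361/100000) ltac:(lra) ltac:(lra)) as h27.
  pose proof (step (27/25) (28/25) (55959/100000) ltac:(lra) ltac:(lra)) as h28.
  pose proof (step (28/25) (29/25) (53572/100000) ltac:(lra) ltac:(lra)) as h29.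
  pose proof (step (29/25) (30/25) (51208/100000) ltac:(lra) ltac:(lra)) as h30.
  pose proof (step (30/25) (31/25) (48872/100000) ltac:(lra) ltac:(lra)) as h31.
  pose proof (step (31/25) (32/25) (46570/100000) ltac:(lra) ltac:(lra)) as h32.
  pose proof (step (32/25) (33/25) (44309/100000) ltac:(lra) ltac:(lra)) as h33.
  pose proof (step (33/25) (34/25) (42092/100000) ltac:(lra) ltac:(lra)) as h34.
  pose proof (step (34/25) (35/25) (39925/100000) ltac:(lra) ltac:(lra)) as h35.
  pose proof (step (35/25) (36/25) (37811/100000) ltac:(lra) ltac:(lra)) as h36.
  pose proof (step (36/25) (37/25) (35755/100000) ltac:(lra) ltac:(lra)) as h37.
  pose proof (step (37/25) (38/25) (33759/100000) ltac:(lra) ltac:(lra)) as h38.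
  pose proof (step (38/25) (39/25) (31826/100000) ltac:(lra) ltac:(lra)) as h39.
  pose proof (step (39/25) (40/25) (29958/100000) ltac:(lra) ltac:(lra)) as h40.
  pose proof (step (40/25) (41/25) (28158/100000) ltac:(lra) ltac:(lra)) as h41.
  pose proof (step (41/25) (42/25) (26425/100000) ltac:(lra) ltac:(lra)) as h42.
  pose proof (step (42/25) (43/25) (24762/100000) ltac:(lra) ltac:(lra)) as h43.
  pose proof (step (43/25) (44/25) (23169/100000) ltac:(lra) ltac:(lra)) as h44.
  pose proof (step (44/25) (45/25) (21646/100000) ltac:(lra) ltac:(lra)) as h45.
  pose proof (step (45/25) (46/25) (20193/100000) ltac:(lra) ltac:(lra)) as h46.
  pose proof (step (46/25) (47/25) (18810/100000) ltac:(lra) ltac:(lra)) as h47.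
  pose proof (step (47/25) (48/25) (17496/100000) ltac:(lra) ltac:(lra)) as h48.
  pose proof (step (48/25) (49/25) (16249/100000) ltac:(lra) ltac:(lra)) as h49.
  pose proof (step (49/25) (50/25) (15069/100000) ltac:(lra) ltac:(lra)) as h50.
  pose proof (step (50/25) (51/25) (13955/100000) ltac:(lra) ltac:(lra)) as h51.
  pose proof (step (51/25) (52/25) (12904/100000) ltac:(lra) ltac:(lra)) as h52.
  pose proof (step (52/25) (53/25) (11915/100000) ltac:(lra) ltac:(lra)) as h53.
  pose proof (step (53/25) (54/25) (10985/100000) ltac:(lra) ltac:(lra)) as h54.
  pose proof (step (54/25) (55/25) (10114/100000) ltac:(lra) ltac:(lra)) as h55.
  pose proof (step (55/25) (56/25) (9299/100000) ltac:(lra) ltac:(lra)) as h56.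
  assert (0 < / SS) by (apply Rinv_0_lt_compat, SS_pos).
  split; lra.
Qed.

Lemma II_nonneg a b : 0 <= a <= b -> 0 <= II a b.
Proof.
  intros H. pose proof (II_bounds a b H) as [H1 _].
  pose proof (phi_pos b). assert (0 <= b - a) by lra.
  assert (0 <= phi b * (b - a)) by (apply Rmult_le_pos; lra). lra.
Qed.

Lemma J_mono a b : 0 <= a <= b -> J a <= J b.
Proof. intros H. rewrite (J_split a b). pose proof (II_nonneg a b H). lra. Qed.

Lemma invSS_ub : / SS <= 100/249.
Proof.
  pose proof SS_lb. replace (100/249) with (/ (249/100)) by field.
  apply Rinv_le_contravar; lra.
Qed.

Lemma J_sqrt2 : J (sqrt 2) < / 2.
Proof.
  destruct J_chain as [_ H]. pose proof invSS_ub.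
  assert (Hs : sqrt 2 <= 36/25).
  { rewrite <- (sqrt_pow2 (36/25)) by lra. apply sqrt_le_1_alt. lra. }
  pose proof (J_mono (sqrt 2) (36/25) ltac:(split; [apply sqrt_pos | exact Hs])).
  assert (0 < / SS) by (apply Rinv_0_lt_compat, SS_pos). lra.
Qed.

Lemma J_224 x : 0 <= x <= 56/25 -> J x <= / 2.
Proof.
  intros Hx. destruct J_chain as [H _]. pose proof invSS_ub.
  pose proof (J_mono x (56/25) Hx).
  assert (0 < / SS) by (apply Rinv_0_lt_compat, SS_pos). lra.
Qed.

Lemma x_sq c : 0 < c -> / sqrt c * / sqrt c = / c.
Proof.
  intros Hc. pose proof (sqrt_lt_R0 c Hc). rewrite <- Rinv_mult.
  rewrite sqrt_sqrt; lra.
Qed.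

Lemma phi_ratio x y : phi x = exp ((y * y - x * x) / 2) * phi y.
Proof.
  unfold phi. unfold Rdiv. rewrite <- Rmult_assoc, <- exp_plus. f_equal. f_equal. field.
Qed.

Lemma exp57 : exp (5/7) <= 21/10.
Proof.
  eapply Rle_trans. apply exp_ub16. lra.
  replace (/ (1 - 5 / 7 / 16)) with (112/107) by field. lra.
Qed.

Theorem lemma4 (k : nat) (hk : (2 <= k)%nat) :
  let kr := INR k in
  let p := / 2 ^ (k - 1) in
  p * G ((kr ^ 2 + kr + 1) / (2 * kr + 1) ^ 2)
    + (1 - p) * G ((kr ^ 2 + kr - 1) / (2 * kr + 1) ^ 2) >= G (/ 4)
  /\
  p * G ((kr ^ 2 + kr + 1) / (2 * kr + 1) ^ 2) + (1 - p) * / 2 >= G (/ 4).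
Proof.
  intros kr p.
  assert (Hk : 2 <= kr) by (unfold kr; apply le_INR in hk; simpl in hk; lra).
  set (A := kr ^ 2 + kr + 1). set (B := kr ^ 2 + kr - 1).
  assert (HA : 7 <= A) by (unfold A; nra).
  assert (HB : 5 <= B) by (unfold B; nra).
  assert (Hc1 : 0 < A / (2 * kr + 1) ^ 2) by (apply Rdiv_lt_0_compat; [lra| apply pow_lt; lra]).
  assert (Hc2 : 0 < B / (2 * kr + 1) ^ 2) by (apply Rdiv_lt_0_compat; [lra| apply pow_lt; lra]).
  assert (Hx0 : / sqrt (/ 4) = 2).
  { replace (/ 4) with (/ 2 * / 2) by field. rewrite sqrt_square by lra. field. }
  unfold G. rewrite Hx0. unfold Phi.
  set (x1 := / sqrt (A / (2 * kr + 1) ^ 2)).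
  set (x2 := / sqrt (B / (2 * kr + 1) ^ 2)).
  change (RiemannInt (phi_integrable 0 x1)) with (J x1).
  change (RiemannInt (phi_integrable 0 x2)) with (J x2).
  change (RiemannInt (phi_integrable 0 2)) with (J 2).
  change (RiemannInt (phi_integrable 0 (sqrt 2))) with (J (sqrt 2)).
  assert (Hx1p : 0 < x1) by (apply Rinv_0_lt_compat, sqrt_lt_R0; exact Hc1).
  assert (Hx2p : 0 < x2) by (apply Rinv_0_lt_compat, sqrt_lt_R0; exact Hc2).
  assert (Hx1s : x1 * x1 = 4 - 3 / A).
  { unfold x1. rewrite x_sq by exact Hc1. unfold A. field. split; nra. }
  assert (Hx2s : x2 * x2 = 4 + 5 / B).
  { unfold x2. rewrite x_sq by exact Hc2. unfold B. field. split; nra. }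
  assert (H3A : 0 < 3 / A <= 3 / 7).
  { split. apply Rdiv_lt_0_compat; lra. unfold Rdiv. apply Rmult_le_compat_l; [lra|].
    apply Rinv_le_contravar; lra. }
  assert (H5B : 0 < 5 / B <= 1).
  { split. apply Rdiv_lt_0_compat; lra. replace 1 with (5 * / 5) by field.
    unfold Rdiv. apply Rmult_le_compat_l; [lra|]. apply Rinv_le_contravar; lra. }
  assert (Hx1a : 1 <= x1 < 2) by (split; nra).
  assert (Hx2a : 2 < x2 <= 56/25) by (split; nra).
  assert (Hp0 : 0 < p) by (apply Rinv_0_lt_compat, pow_lt; lra).
  set (d := (x2 * x2 - x1 * x1) / 2).
  assert (Hkey0 : p * (2 - x1) * exp d <= (1 - p) * (x2 - 2)).
  { destruct (Nat.eq_dec k 2) as [E|E].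
    - assert (Ekr : kr = 2) by (unfold kr; rewrite E; simpl; ring).
      assert (Ep : p = / 2) by (unfold p; rewrite E; simpl; field).
      assert (EA : A = 7) by (unfold A; rewrite Ekr; ring).
      assert (EB : B = 5) by (unfold B; rewrite Ekr; ring).
      rewrite EA in Hx1s. rewrite EB in Hx2s.
      assert (Ed : d = 5/7) by (unfold d; rewrite Hx1s, Hx2s; field).
      rewrite Ed, Ep. pose proof exp57. pose proof (exp_pos (5/7)).
      assert (1889/1000 <= x1) by nra.
      assert (2236/1000 <= x2) by nra.
      assert ((2 - x1) * exp (5/7) <= 111/1000 * (21/10)) by
        (apply Rmult_le_compat; lra).
      lra.
    - assert (Hk3 : (3 <= k)%nat) by lia.
      assert (Hkr3 : 3 <= kr) by (unfold kr; apply le_INR in Hk3; simpl in Hk3; lra).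
      assert (Hp4 : p <= / 4).
      { unfold p. destruct k as [|[|[|m]]]; try lia.
        replace (S (S (S m)) - 1)%nat with (S (S m)) by lia.
        apply Rinv_le_contravar; [lra|]. simpl.
        pose proof (pow_R1_Rle 2 m ltac:(lra)). lra. }
      assert (HA13 : 13 <= A) by (unfold A; nra).
      assert (HB11 : 11 <= B) by (unfold B; nra).
      assert (HBA : B <= A) by (unfold A, B; lra).
      assert (HiA : 3 / A <= 3 / 13).
      { unfold Rdiv. apply Rmult_le_compat_l; [lra|]. apply Rinv_le_contravar; lra. }
      assert (HiB : 5 / B <= 5 / 11).
      { unfold Rdiv. apply Rmult_le_compat_l; [lra|]. apply Rinv_le_contravar; lra. }
      assert (Hd1 : d <= 1) by (unfold d; rewrite Hx1s, Hx2s; lra).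
      assert (He3 : exp d <= 3).
      { pose proof exp_le_3. destruct Hd1 as [Hd1|Hd1].
        - pose proof (exp_increasing _ _ Hd1). lra.
        - rewrite Hd1. exact exp_le_3. }
      assert (Hab : /A <= /B) by (apply Rinv_le_contravar; lra).
      assert (Ha : 2 - x1 <= / A).
      { assert ((2 - x1) * (2 + x1) = 3 / A) by nra.
        assert ((2 - x1) * 3 <= 3 / A) by nra.
        replace (3 / A) with (3 * / A) in * by (unfold Rdiv; ring). lra. }
      assert (Hb : / B <= x2 - 2).
      { assert ((x2 - 2) * (x2 + 2) = 5 / B) by nra.
        assert (5 / B <= (x2 - 2) * 5) by nra.
        replace (5 / B) with (5 * / B) in * by (unfold Rdiv; ring). lra. }
      pose proof (exp_pos d).
      assert (0 < / B) by (apply Rinv_0_lt_compat; lra).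
      assert ((2 - x1) * exp d <= / B * 3) by (apply Rmult_le_compat; lra).
      assert (p * ((2 - x1) * exp d) <= p * (/ B * 3)) by (apply Rmult_le_compat_l; lra).
      assert ((1 - p) * / B <= (1 - p) * (x2 - 2)) by (apply Rmult_le_compat_l; lra).
      nra. }
  assert (Hkey : p * II x1 2 <= (1 - p) * II 2 x2).
  { pose proof (II_bounds x1 2 ltac:(lra)) as [_ H1].
    pose proof (II_bounds 2 x2 ltac:(lra)) as [H2 _].
    rewrite (phi_ratio x1 x2) in H1. fold d in H1.
    pose proof (phi_pos x2). pose proof (exp_pos d).
    assert (p * II x1 2 <= p * (exp d * phi x2 * (2 - x1))) by (apply Rmult_le_compat_l; lra).
    assert ((1 - p) * (phi x2 * (x2 - 2)) <= (1 - p) * II 2 x2).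
    { apply Rmult_le_compat_l; [|lra]. unfold p.
      assert (1 <= 2 ^ (k - 1)) by (apply pow_R1_Rle; lra).
      assert (/ 2 ^ (k - 1) <= 1) by (rewrite <- Rinv_1; apply Rinv_le_contravar; lra). lra. }
    assert (p * (2 - x1) * exp d * phi x2 <= (1 - p) * (x2 - 2) * phi x2)
      by (apply Rmult_le_compat_r; lra).
    nra. }
  pose proof (J_split x1 2) as S1. pose proof (J_split 2 x2) as S2.
  pose proof J_sqrt2 as HD.
  pose proof (J_224 x2 ltac:(lra)) as Hq2.
  set (D := 1 - (/ 2 + J (sqrt 2))).
  assert (HDp : 0 < D) by (unfold D; lra).
  set (q0 := 1 - (/ 2 + J 2)). set (q1 := 1 - (/ 2 + J x1)). set (q2 := 1 - (/ 2 + J x2)).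
  assert (Hq : p * q1 + (1 - p) * q2 <= q0).
  { unfold q0, q1, q2. rewrite S1 in *. rewrite S2. nra. }
  assert (Hq' : p * (q1 / D) + (1 - p) * (q2 / D) <= q0 / D).
  { replace (p * (q1 / D) + (1 - p) * (q2 / D)) with ((p * q1 + (1 - p) * q2) / D) by (field; lra).
    unfold Rdiv. apply Rmult_le_compat_r; [left; apply Rinv_0_lt_compat; exact HDp | exact Hq]. }
  assert (Hp1 : p <= 1).
  { unfold p. assert (1 <= 2 ^ (k - 1)) by (apply pow_R1_Rle; lra).
    rewrite <- Rinv_1. apply Rinv_le_contravar; lra. }
  assert (Hr2 : 0 <= (1 - p) * (q2 / D)).
  { apply Rmult_le_pos; [lra|]. unfold Rdiv. apply Rmult_le_pos; [unfold q2; lra|].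
    left. apply Rinv_0_lt_compat. exact HDp. }
  split; lra.
Qed.
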